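(* Let $X$ be an orbifold, $Y\to X$ its orbifold universal cover and $G=\pi_1^{orb}(X)$, acting on $Y$ with $X=Y/G$. Let $\alpha$ be a U(1)-valued 2-cocycle on $G$ (normalized, $\alpha_{g,hk}\alpha_{h,k}=\alpha_{g,h}\alpha_{gh,k}$), with phase $\gamma(\alpha)_{g,h}=\alpha_{g,h}\alpha_{h,g}^{-1}$. For $1\ne g\in G$ with nonempty fixed locus $Y_g$, let $L_g=Y_g\times_{L^\alpha_g}\mathbb C$ be the flat complex orbifold line bundle over $Y_g/C(g)$ obtained as the quotient of $Y_g\times\mathbb C$ by $C(g)$ acting via $h\cdot(y,v)=(hy,\gamma(\alpha)_{g,h}v)$. Then: (1) for every $t\in G$, the map $t\times\mathrm{Id}:Y_g\times\mathbb C\to Y_{tgt^{-1}}\times\mathbb C$ induces an isomorphism $L_g\cong L_{tgt^{-1}}$ (covering the identification $Y_g/C(g)\cong Y_{tgt^{-1}}/C(tgt^{-1})$ induced by $t$); so $L_g$ depends only on the conjugacy class $(g)$ and may be denoted $L_{(g)}$; (2) $L_{(g)}^{-1}\cong L_{(g^{-1})}$ (over $Y_g/C(g)=Y_{g^{-1}}/C(g^{-1})$); (3) for $g_1,\dots,g_k\in G$, over $Y_{g_1}\cap\dots\cap Y_{g_k}/C(g_1,\dots,g_k)$ (with $C(g_1,\dots,g_k)$ the common centralizer), the pullbacks satisfy $L_{(g_1,\dots,g_k)}\cong L_{(g_1)}\otimes\cdots\otimes L_{(g_k)}$, where $L_{(g_1,\dots,g_k)}=(Y_{g_1}\cap\dots\cap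 Y_{g_k})\times_{\gamma_{g_1\cdots g_k}}\mathbb C$ is defined using the character $h\mapsto\gamma(\alpha)_{g_1\cdots g_k,h}$ of $C(g_1,\dots,g_k)$.
   Context: An orbifold covering $f:Y\to X$ is a smooth map which locally looks like $U/G_p\to U/\Gamma$ with $G_p\subset\Gamma$ a subgroup, and such that over a chart $U_q/G_q$ of $X$ each component of the preimage is $U_q/\Gamma'$ with $\Gamma'\subset G_q$. The orbifold universal cover is a connected orbifold cover factoring through every orbifold cover; it exists (Thurston), and its deck group is the orbifold fundamental group $\pi_1^{orb}(X)$. For $h\in C(g)$ the map $h\mapsto\gamma(\alpha)_{g,h}$ is a homomorphism $C(g)\to U(1)$, denoted $L^\alpha_g$. *)

(* Defs.v *)
From HB Require Import structures.
From mathcomp Require Import all_boot all_order all_algebra.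
From mathcomp Require Import reals.
From mathcomp Require Import complex.
Set Implicit Arguments. Unset Strict Implicit. Unset Printing Implicit Defensive.
Import Order.TTheory GRing.Theory Num.Theory.
Local Open Scope ring_scope.

(* An abstract (possibly infinite) group, e.g. pi_1^orb(X). *)
Record Grp := {
  gcar :> Type;
  gmul : gcar -> gcar -> gcar;
  gone : gcar;
  ginv : gcar -> gcar;
  gmulA : forall x y z, gmul x (gmul y z) = gmul (gmul x y) z;
  gmul1g : forall x, gmul gone x = x;
  gmulg1 : forall x, gmul x gone = x;
  gmulVg : forall x, gmul (ginv x) x = gone;
  gmulgV : forall x, gmul x (ginv x) = gone
}.

Section Defs.
Variable G : Grp.
Variable R : realType.

Definition is_action (Y : Type) (act : G -> Y -> Y) :=
  (forall y, act (gone G) y = y) /\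
  (forall g h y, act (gmul g h) y = act g (act h y)).

Definition U1_cocycle (a : G -> G -> R[i]) :=
  (forall g h k, a g (gmul h k) * a h k = a g h * a (gmul g h) k) /\
  (forall g, a (gone G) g = 1 /\ a g (gone G) = 1) /\
  (forall g h, `|a g h| = 1).

Definition phase (a : G -> G -> R[i]) (g h : G) : R[i] := a g h / a h g.

Definition fixedY (Y : Type) (act : G -> Y -> Y) (g : G) (y : Y) := act g y = y.

Definition centr (g h : G) := gmul h g = gmul g h.

Definition conjg' (t g : G) : G := gmul (gmul t g) (ginv t).

(* action of h in C(g) on Y_g x C defining L_g = Y_g x_{L^alpha_g} C *)
Definition Lact (Y : Type) (act : G -> Y -> Y) (a : G -> G -> R[i]) (g h : G)
  (p : Y * R[i]) : Y * R[i] := (act h p.1, phase a g h * p.2).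

Definition Ldual_act (Y : Type) (act : G -> Y -> Y) (a : G -> G -> R[i]) (g h : G)
  (p : Y * R[i]) : Y * R[i] := (act h p.1, (phase a g h)^-1 * p.2).

(* action defining L_(g1) (x) ... (x) L_(gk) on Y_{g1} cap ... cap Y_{gk} x C
   (tensor product of the lines C is identified with C, characters multiply) *)
Definition Ltensor_act (Y : Type) (act : G -> Y -> Y) (a : G -> G -> R[i])
  (gs : seq G) (h : G) (p : Y * R[i]) : Y * R[i] :=
  (act h p.1, foldr (fun g acc => phase a g h * acc) 1 gs * p.2).

Definition gprod (gs : seq G) : G := foldr (@gmul G) (gone G) gs.
End Defs.

(* Main.v *)
Require Import Defs.
From HB Require Import structures.
From mathcomp Require Import all_boot all_order all_algebra.
From mathcomp Require Import reals.
From mathcomp Require Import complex.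
From Stdlib Require List.
From mathcomp Require Import ring.
Import Order.TTheory GRing.Theory Num.Theory.
Local Open Scope ring_scope.

Lemma fl1 (F:fieldType) (A B C D E F' H I J : F): C!=0 -> F'!=0 -> H != 0 -> J != 0 -> E != 0 -> A*B = C*D -> E*C = F'*H -> A*J = I*H -> D/E = I/F' * (B/J).
Proof.
move=> nC nF nH nJ nE e1 e2 e3.
have -> : D = A*B/C by rewrite e1 [C*D]mulrC mulfK.
have -> : E = F'*H/C by rewrite -e2 mulfK.
have -> : A = I*H/J by rewrite -e3 mulfK.
by field; rewrite ?mulf_neq0 ?invr_eq0 ?andbT ?nC ?nF ?nH ?nJ ?nE ?nX ?nTg ?nP ?nTh ?nQ ?nU ?nVt ?nW ?nM ?nZ ?nJr ?nJp.
Qed.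

Lemma fl2 (F:fieldType) (X I Tg P Jr Th Q U Vt W M Ip Z Jp : F) :
  X != 0 -> Tg != 0 -> P != 0 -> Th != 0 -> Q != 0 -> U != 0 -> Vt != 0 ->
  W != 0 -> M != 0 -> Z != 0 -> Jr != 0 -> Jp != 0 ->
  X * I = Tg * P -> X * Jr = Th * Q -> U * Th = Vt * P -> U * M = Ip * Z ->
  W * Tg = M * Q -> W * Vt = Jp * Z -> I / Jr = Ip / Jp.
Proof.
move=> nX nTg nP nTh nQ nU nVt nW nM nZ nJr nJp e1 e2 e3 e4 e5 e6.
have -> : I = Tg * P / X by rewrite -e1 [X*I]mulrC mulfK.
have -> : Jr = Th * Q / X by rewrite -e2 [X*Jr]mulrC mulfK.
have -> : Ip = U * M / Z by rewrite e4 mulfK.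
have -> : Jp = W * Vt / Z by rewrite e6 mulfK.
have -> : P = U * Th / Vt by rewrite e3 [Vt*P]mulrC mulfK.
have -> : Q = W * Tg / M by rewrite e5 [M*Q]mulrC mulfK.
by field; rewrite ?mulf_neq0 ?invr_eq0 ?andbT ?nC ?nF ?nH ?nJ ?nE ?nX ?nTg ?nP ?nTh ?nQ ?nU ?nVt ?nW ?nM ?nZ ?nJr ?nJp.
Qed.

Section Aux.
Variable R : realType.
Variable G : Grp.
Variable a : G -> G -> R[i].
Hypothesis Ha : U1_cocycle a.

Declare Scope grp_scope.
Local Notation "x * y" := (gmul x y) : grp_scope.
Delimit Scope grp_scope with g.

Lemma anz x y : a x y != 0.
Proof.
case: Ha => _ [_ H]; apply/eqP => e; have := H x y; rewrite e normr0.
by move/eqP; rewrite eq_sym oner_eq0.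
Qed.


Lemma cocy x y z : a x (y * z)%g * a y z = a x y * a (x * y)%g z.
Proof. by case: Ha. Qed.

Lemma phase_mul g k h : centr g h -> centr k h ->
  phase a (g * k)%g h = phase a g h * phase a k h.
Proof.
rewrite /centr /phase => cg ck.
apply: (@fl1 _ (a g (k * h)%g) (a k h) (a g k) _ _ (a h g) (a (h * g)%g k));
  rewrite ?anz //; by rewrite ?cocy // -ck cg cocy.
Qed.

Lemma phase1 h : phase a (gone G) h = 1.
Proof. case: Ha => _ [H _]; by rewrite /phase (proj1 (H h)) (proj2 (H h)) divr1. Qed.

Lemma ginvK (g : G) : ginv (ginv g) = g.
Proof.
by rewrite -[ginv (ginv g)]gmulg1 -(gmulVg g) gmulA gmulVg gmul1g.
Qed.

Lemma centrV (g h : G) : centr g h -> centr (ginv g) h.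
Proof.
rewrite /centr => c.
rewrite -[(h * ginv g)%g]gmul1g -(gmulVg g) -!gmulA [(g * (h * _))%g]gmulA -c.
by rewrite -gmulA gmulgV gmulg1.
Qed.

Lemma phase_inv g h : centr g h -> phase a (ginv g) h = (phase a g h)^-1.
Proof.
move=> c.
have := @phase_mul (ginv g) g h (@centrV g h c) c; rewrite gmulVg phase1 => e.
have nz : phase a g h != 0 by rewrite /phase mulf_neq0 ?invr_eq0 ?anz.
by apply: (mulIf nz); rewrite -e mulVf.
Qed.

Lemma conj_mul (t x y : G) : conjg' t (x * y)%g = (conjg' t x * conjg' t y)%g.
Proof.
rewrite /conjg' -!gmulA; congr (gmul t _); congr (gmul x _).
by rewrite [(ginv t * _)%g]gmulA gmulVg gmul1g.
Qed.

Lemma conjK (t x : G) : conjg' (ginv t) (conjg' t x) = x.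
Proof.
rewrite /conjg' ginvK -!gmulA gmulVg gmulg1 !gmulA gmulVg gmul1g //.
Qed.

Lemma conj_t (t x : G) : (conjg' t x * t)%g = (t * x)%g.
Proof. by rewrite /conjg' -gmulA gmulVg gmulg1. Qed.

Lemma phase_conj t g h : centr g h ->
  phase a (conjg' t g) (conjg' t h) = phase a g h.
Proof.
rewrite /centr /phase => c.
set g' := conjg' t g; set h' := conjg' t h.
have c' : (h' * g')%g = (g' * h')%g by rewrite /g' /h' -!conj_mul c.
have tg : (t * g)%g = (g' * t)%g by rewrite conj_t.
have th : (t * h)%g = (h' * t)%g by rewrite conj_t.
symmetry.
apply: (@fl2 _ (a t (h * g)%g) _ (a t g) (a (g' * t)%g h) _ (a t h)
  (a (h' * t)%g g) (a g' (h' * t)%g) (a g' t) (a h' (g' * t)%g) (a h' t) _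
  (a (g' * h')%g t)); rewrite ?anz //.
- by rewrite c cocy tg.
- by rewrite cocy th.
- by rewrite -th cocy.
- by rewrite cocy.
- by rewrite -tg cocy.
- by rewrite cocy c'.
Qed.

End Aux.

Lemma part1 (R : realType) (G : Grp) (Y : Type) (act : G -> Y -> Y)
  (Hact : is_action act) (a : G -> G -> R[i]) (Ha : U1_cocycle a) :
  (forall g t : G, g <> gone G -> (exists y, fixedY act g y) ->
     (forall y, fixedY act g y -> fixedY act (conjg' t g) (act t y)) /\
     (forall y', fixedY act (conjg' t g) y' ->
        exists y, fixedY act g y /\ act t y = y') /\
     (forall y1 y2, act t y1 = act t y2 -> y1 = y2) /\
     (forall h, centr g h <-> centr (conjg' t g) (conjg' t h)) /\
     (forall h (p : Y * R[i]), centr g h -> fixedY act g p.1 ->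
        (act t (Lact act a g h p).1, (Lact act a g h p).2)
        = Lact act a (conjg' t g) (conjg' t h) (act t p.1, p.2))).
Proof.
case: Hact => act1 actM.
have actK t y : act (ginv t) (act t y) = y by rewrite -actM gmulVg act1.
have actK' t y : act t (act (ginv t) y) = y by rewrite -actM gmulgV act1.
- move=> g t _ _; split; [|split; [|split; [|split]]].
  + move=> y; rewrite /fixedY /conjg' => fy.
    by rewrite -!actM -gmulA gmulVg gmulg1 actM fy.
  + move=> y' fy; exists (act (ginv t) y'); split => //.
    rewrite /fixedY; move: fy; rewrite /fixedY => fy.
    have eg : g = gmul (gmul (ginv t) (conjg' t g)) t.
      by rewrite -{1}(@conjK G t g) /conjg' ginvK.
    by rewrite {1}eg actM (actM (ginv t) (conjg' t g)) actK' fy.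
  + by move=> y1 y2 e; rewrite -(actK t y1) e actK.
  + move=> h; rewrite /centr -!conj_mul; split => [-> //|e].
    by rewrite -(@conjK G t (gmul h g)) e conjK.
  + move=> h [y v] c fy; rewrite /Lact (@phase_conj R G a Ha t g h c).
    by rewrite -!actM conj_t.
Qed.
Lemma part2 (R : realType) (G : Grp) (Y : Type) (act : G -> Y -> Y)
  (Hact : is_action act) (a : G -> G -> R[i]) (Ha : U1_cocycle a) :
  (forall g : G, g <> gone G -> (exists y, fixedY act g y) ->
     (forall y, fixedY act g y <-> fixedY act (ginv g) y) /\
     (forall h, centr g h <-> centr (ginv g) h) /\
     (forall h (p : Y * R[i]), centr g h -> fixedY act g p.1 ->
        Ldual_act act a g h p = Lact act a (ginv g) h p)).
Proof.
case: Hact => act1 actM.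
have actK t y : act (ginv t) (act t y) = y by rewrite -actM gmulVg act1.
have actK' t y : act t (act (ginv t) y) = y by rewrite -actM gmulgV act1.
- move=> g _ _; split; [|split].
  + move=> y; rewrite /fixedY; split => e.
    * by rewrite -{1}e actK.
    * by rewrite -{1}e actK' .
  + move=> h; split; first exact: centrV.
    by move/centrV; rewrite ginvK.
  + move=> h [y v] c _; by rewrite /Ldual_act /Lact (@phase_inv R G a Ha g h c).
Qed.
Lemma part3 (R : realType) (G : Grp) (a : G -> G -> R[i]) (Ha : U1_cocycle a) (gs : seq G) h :
  (forall g, List.In g gs -> centr g h) ->
  phase a (gprod gs) h = foldr (fun g acc => phase a g h * acc) 1 gs.
Proof.
  elim: gs => [|g gs IH] cs.
    exact: (@phase1 R G a Ha h).
  have cg : centr g h by apply: cs; left.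
  have cgs : forall x, List.In x gs -> centr x h by move=> x hx; apply: cs; right.
  have cp : centr (gprod gs) h.
    elim: (gs) cgs => [|x xs IHx] cx; first by rewrite /centr /gprod /= gmul1g gmulg1.
    rewrite /centr /gprod /= -/(gprod xs) gmulA (cx x (or_introl erefl)) -gmulA.
    by rewrite (IHx (fun z hz => cx z (or_intror hz))) gmulA.
  rewrite /gprod /= -/(gprod gs) (@phase_mul R G a Ha g (gprod gs) h cg cp).
  by rewrite (IH cgs).
Qed.
Theorem lemma4p2 (R : realType) (G : Grp) (Y : Type) (act : G -> Y -> Y)
  (Hact : is_action act) (a : G -> G -> R[i]) (Ha : U1_cocycle a) :
  (forall g t : G, g <> gone G -> (exists y, fixedY act g y) ->
     (forall y, fixedY act g y -> fixedY act (conjg' t g) (act t y)) /\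
     (forall y', fixedY act (conjg' t g) y' ->
        exists y, fixedY act g y /\ act t y = y') /\
     (forall y1 y2, act t y1 = act t y2 -> y1 = y2) /\
     (forall h, centr g h <-> centr (conjg' t g) (conjg' t h)) /\
     (forall h (p : Y * R[i]), centr g h -> fixedY act g p.1 ->
        (act t (Lact act a g h p).1, (Lact act a g h p).2)
        = Lact act a (conjg' t g) (conjg' t h) (act t p.1, p.2))) /\
  (forall g : G, g <> gone G -> (exists y, fixedY act g y) ->
     (forall y, fixedY act g y <-> fixedY act (ginv g) y) /\
     (forall h, centr g h <-> centr (ginv g) h) /\
     (forall h (p : Y * R[i]), centr g h -> fixedY act g p.1 ->
        Ldual_act act a g h p = Lact act a (ginv g) h p)) /\
  (forall (gs : seq G) h (p : Y * R[i]),
     (forall g, List.In g gs -> centr g h) ->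
     (forall g, List.In g gs -> fixedY act g p.1) ->
     Lact act a (gprod gs) h p = Ltensor_act act a gs h p).
Proof.
split; first exact: (@part1 R G Y act Hact a Ha).
split; first exact: (@part2 R G Y act Hact a Ha).
move=> gs h [y v] cs _; rewrite /Lact /Ltensor_act.
by rewrite (@part3 R G a Ha gs h cs).
Qed.
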